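(* With $n,t,T$, $c(\theta)$ and $s_e(\theta)$ as in the context, we have $|c(\theta)|\le\sqrt{n}$ and $|s_e(\theta)|\le 6\sqrt{n}$ for every $\theta\in\mathbb{R}$.
   Context: Rudin–Shapiro polynomials: $P_0(z)=Q_0(z)=1$ and for $s\ge0$, $P_{s+1}(z)=P_s(z)+z^{2^s}Q_s(z)$, $Q_{s+1}(z)=P_s(z)-z^{2^s}Q_s(z)$. Since the first $2^s$ coefficients of $P_{s+1}$ coincide with those of $P_s$, for each $m\ge1$ let $P_{<m}(z)$ denote the polynomial of degree $m-1$ whose coefficients agree with the first $m$ coefficients of $P_s$ for all sufficiently large $s$. Standing setup: $n$ is a sufficiently large positive integer, $t$ is an odd integer such that $\gamma:=(2^{t+11}+2^t-1)/n$ satisfies $2^{-43}<\gamma\le2^{-40}$, and $T:=2^{t+10}$. With $z=e^{2i\theta}$, define $c(\theta):=\mathrm{Re}\big(z^TP_t(z)+z^{2T}Q_t(z)\big)$ and $s_e(\theta):=\mathrm{Im}\big(P_{<(n+1)}(z)-z^TP_t(z)-z^{2T}P_t(z)\big)$. *)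

(* Defs.v *)
From mathcomp Require Import all_boot all_order all_algebra.
From mathcomp Require Import complex.
From mathcomp Require Import reals trigo.
Set Implicit Arguments. Unset Strict Implicit. Unset Printing Implicit Defensive.
Import Order.TTheory GRing.Theory Num.Theory.
Local Open Scope ring_scope.

Fixpoint RS (K : comNzRingType) (s : nat) : {poly K} * {poly K} :=
  match s with
  | 0 => (1, 1)
  | s'.+1 => let: (P, Q) := RS K s' in
             (P + 'X^(2 ^ s') * Q, P - 'X^(2 ^ s') * Q)
  end.

Definition RSP (K : comNzRingType) (s : nat) : {poly K} := (RS K s).1.
Definition RSQ (K : comNzRingType) (s : nat) : {poly K} := (RS K s).2.

(* P_{<m}: the polynomial of degree m-1 whose coefficients are the first m
   coefficients of P_s for s large; s = m suffices since 2^m >= m. *)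
Definition RSPlt (K : comNzRingType) (m : nat) : {poly K} :=
  \poly_(k < m) (RSP K m)`_k.

Definition zexp (R : realType) (theta : R) : R[i] :=
  Complex (cos (2 * theta)) (sin (2 * theta)).

Definition cfun (R : realType) (t : nat) (theta : R) : R :=
  let z := zexp theta in
  let T := (2 ^ (t + 10))%N in
  complex.Re (z ^+ T * (RSP R[i] t).[z] + z ^+ (2 * T) * (RSQ R[i] t).[z]).

Definition sefun (R : realType) (n t : nat) (theta : R) : R :=
  let z := zexp theta in
  let T := (2 ^ (t + 10))%N in
  complex.Im ((RSPlt R[i] n.+1).[z] - z ^+ T * (RSP R[i] t).[z]
      - z ^+ (2 * T) * (RSP R[i] t).[z]).

(* Main.v *)
Require Import Defs.
From mathcomp Require Import all_boot all_order all_algebra.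
From mathcomp Require Import complex.
From mathcomp Require Import reals trigo.
From mathcomp Require Import ring lra zify.
Import Order.TTheory GRing.Theory Num.Theory.
Local Open Scope ring_scope.

Section Aux.
Variable R : realType.
Local Notation C := R[i].
Local Notation re := (@complex.Re R).
Local Notation im := (@complex.Im R).
Definition nc (x : C) : R := Normc.normc x.

Lemma nc_ge0 x : 0 <= nc x.
Proof. by case: x => a b; rewrite /nc /=; apply: sqrtr_ge0. Qed.

Lemma nc_sqr x : nc x ^+ 2 = re x ^+ 2 + im x ^+ 2.
Proof. by case: x => a b; rewrite /nc /= sqr_sqrtr // addr_ge0 // sqr_ge0. Qed.

Lemma ncM x y : nc (x * y) = nc x * nc y.
Proof. exact: Normc.normcM. Qed.

Lemma ncD x y : nc (x + y) <= nc x + nc y.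
Proof. exact: le_normcD. Qed.

Lemma ncN x : nc (- x) = nc x.
Proof. exact: normcN. Qed.

Lemma sq_le (a b : R) : 0 <= a -> 0 <= b -> a ^+ 2 <= b ^+ 2 -> a <= b.
Proof. by move=> ha hb; rewrite ler_pXn2r. Qed.

Lemma nc_Re x : `|re x| <= nc x.
Proof.
apply: sq_le => //; first exact: nc_ge0.
by rewrite nc_sqr real_normK ?num_real // lerDl sqr_ge0.
Qed.

Lemma nc_Im x : `|im x| <= nc x.
Proof.
apply: sq_le => //; first exact: nc_ge0.
by rewrite nc_sqr real_normK ?num_real // lerDr sqr_ge0.
Qed.

Lemma ReD (x y : C) : re (x + y) = re x + re y.
Proof. by case: x; case: y. Qed.
Lemma ImD (x y : C) : im (x + y) = im x + im y.
Proof. by case: x; case: y. Qed.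
Lemma ReN (x : C) : re (- x) = - re x.
Proof. by case: x. Qed.
Lemma ImN (x : C) : im (- x) = - im x.
Proof. by case: x. Qed.

Lemma parallel (a b : C) :
  nc (a + b) ^+ 2 + nc (a - b) ^+ 2 = 2 * nc a ^+ 2 + 2 * nc b ^+ 2.
Proof. rewrite !nc_sqr !ReD !ImD !ReN !ImN; ring. Qed.

Variable theta : R.
Local Notation z := (zexp theta).

Lemma nc_z : nc z = 1.
Proof. by rewrite /nc /zexp /= cos2Dsin2 sqrtr1. Qed.

Lemma nc_zX k : nc (z ^+ k) = 1.
Proof. by elim: k => [|k IH]; rewrite ?expr0 ?exprS ?ncM ?IH ?nc_z ?mulr1 // /nc Normc.normc1. Qed.

Lemma ncZ k x : nc (z ^+ k * x) = nc x.
Proof. by rewrite ncM nc_zX mul1r. Qed.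

Lemma RS_S (K : comNzRingType) s : RS K s.+1 =
  (RSP K s + 'X^(2 ^ s) * RSQ K s, RSP K s - 'X^(2 ^ s) * RSQ K s).
Proof. by rewrite /RSP /RSQ /=; case: (RS K s). Qed.

Lemma RS_norm s : nc (RSP C s).[z] ^+ 2 + nc (RSQ C s).[z] ^+ 2 = (2 ^ s.+1)%:R.
Proof.
elim: s => [|s IH].
  by rewrite /RSP /RSQ /= hornerC /nc Normc.normc1 expr1n.
rewrite {1}/RSP {1}/RSQ RS_S /= !hornerD hornerN !hornerM hornerXn parallel ncZ.
by rewrite -mulrDr IH [in RHS]expnS natrM.
Qed.

Lemma size_RS s : (size (RSP C s) <= 2 ^ s)%N /\ (size (RSQ C s) <= 2 ^ s)%N.
Proof.
elim: s => [|s [hP hQ]].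
  by rewrite /RSP /RSQ /= size_polyC oner_neq0.
have hX : forall q : {poly C}, (size q <= 2 ^ s)%N -> (size ('X^(2 ^ s) * q)%R <= 2 ^ s.+1)%N.
  move=> q hq; apply: (leq_trans (size_polyMleq _ _)).
  by rewrite size_polyXn expnS /= mul2n -addnn leq_add2l.
rewrite {1}/RSP {1}/RSQ RS_S /=; split.
  apply: (leq_trans (size_polyD _ _)); rewrite geq_max hX // andbT.
  by apply: (leq_trans hP); rewrite expnS mul2n -addnn leq_addr.
apply: (leq_trans (size_polyD _ _)); rewrite geq_max size_polyN hX // andbT.
by apply: (leq_trans hP); rewrite expnS mul2n -addnn leq_addr.
Qed.

Definition PS (p : {poly C}) (m : nat) : C := \sum_(k < m) p`_k * z ^+ k.

Lemma PS_wide (p : {poly C}) m : (size p <= m)%N -> PS p m = p.[z].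
Proof. by move=> h; rewrite /PS; symmetry; apply: horner_coef_wide. Qed.

Lemma PS_add p q m : PS (p + q) m = PS p m + PS q m.
Proof. by rewrite /PS -big_split; apply: eq_bigr => i _; rewrite coefD mulrDl. Qed.

Lemma PS_opp p m : PS (- p) m = - PS p m.
Proof. by rewrite /PS -sumrN; apply: eq_bigr => i _; rewrite coefN mulNr. Qed.

Lemma PS_Xsmall a q m : (m <= a)%N -> PS ('X^a * q) m = 0.
Proof.
move=> h; rewrite /PS big1 // => i _.
by rewrite coefXnM (leq_trans (ltn_ord i) h) mul0r.
Qed.

Lemma PS_X a q r : PS ('X^a * q) (a + r) = z ^+ a * PS q r.
Proof.
rewrite /PS big_split_ord /= big1 ?add0r; last first.
  by move=> i _; rewrite coefXnM /= ltn_ord mul0r.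
rewrite mulr_sumr; apply: eq_bigr => i _.
rewrite coefXnM /= ltnNge leq_addr /= addKn exprD; ring.
Qed.

Lemma step a (U V : {poly C}) m : (0 < a)%N -> (size U <= a)%N -> (size V <= a)%N ->
  (forall m, nc (PS U m) ^+ 2 <= 16 * m%:R) ->
  (forall m, nc (PS V m) ^+ 2 <= 16 * m%:R) ->
  nc U.[z] ^+ 2 <= 2 * a%:R -> nc (U + 'X^a * V).[z] ^+ 2 <= 4 * a%:R ->
  nc (PS (U + 'X^a * V) m) ^+ 2 <= 16 * m%:R.
Proof.
move=> a0 sU sV HU HV hU hW.
case: (leqP m a) => hma.
  by rewrite PS_add PS_Xsmall // addr0.
case: (leqP (2 * a) m) => h2.
  rewrite PS_wide; last first.
    apply: (leq_trans (size_polyD _ _)); rewrite geq_max.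
    apply/andP; split; first by apply: (leq_trans sU); lia.
    apply: (leq_trans (size_polyMleq _ _)); rewrite size_polyXn /=.
    by apply: leq_trans h2; rewrite mul2n -addnn leq_add2l.
  have : (a%:R <= m%:R :> R) by rewrite ler_nat; lia.
  have : (0 <= a%:R :> R) by rewrite ler0n.
  lra.
have -> : m = (a + (m - a))%N by lia.
have hr : ((m - a)%N%:R <= a%:R :> R) by rewrite ler_nat; lia.
move: (m - a)%N hr => r hr.
rewrite PS_add PS_X (@PS_wide U); last by apply: leq_trans sU _; rewrite leq_addr.
have hD := ncD U.[z] (z ^+ a * PS V r).
rewrite ncZ in hD.
have hV := HV r.
have g1 := nc_ge0 U.[z]; have g2 := nc_ge0 (PS V r);
have g3 := nc_ge0 (U.[z] + z ^+ a * PS V r).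
move: hD hV g1 g2 g3 hU hr.
set X := nc U.[z]; set Y := nc (PS V r); set W := nc _.
rewrite natrD.
move=> hD hV g1 g2 g3 hU hr.
have hW2 : W ^+ 2 <= (X + Y) ^+ 2 by nra.
have hsq : 0 <= (2 * X - Y / 2) ^+ 2 by apply: sqr_ge0.
nra.
Qed.

Lemma PS_bound s m : nc (PS (RSP C s) m) ^+ 2 <= 16 * m%:R /\
                     nc (PS (RSQ C s) m) ^+ 2 <= 16 * m%:R.
Proof.
elim: s m => [|s IH] m.
  rewrite /RSP /RSQ /=; case: m => [|m].
    by rewrite /PS big_ord0 /nc Normc.normc0 expr0n /= mulr0; split.
  rewrite PS_wide ?size_polyC ?oner_neq0 // hornerC /nc Normc.normc1 expr1n.
  have : (1 <= m.+1%:R :> R) by rewrite ler1n.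
  by move=> h; split; lra.
have [sP sQ] := size_RS s.
have hN := RS_norm s; have hN1 := RS_norm s.+1.
have g1 := nc_ge0 (RSP C s.+1).[z]; have g2 := nc_ge0 (RSQ C s.+1).[z].
have hPs : nc (RSP C s).[z] ^+ 2 <= 2 * (2 ^ s)%:R.
  rewrite -natrM -expnS -hN lerDl; exact: sqr_ge0.
have e4 : (2 ^ s.+2)%:R = 4 * (2 ^ s)%:R :> R by rewrite !expnS mulnA natrM.
rewrite /RSP /RSQ RS_S /=; split.
  apply: step => //; try by rewrite expn_gt0.
  - by move=> k; case: (IH k).
  - by move=> k; case: (IH k).
  - have : nc (RSQ C s.+1).[z] ^+ 2 >= 0 by apply: sqr_ge0.
    rewrite /RSP /RSQ RS_S /= in hN1 *; rewrite e4 in hN1; lra.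
rewrite -mulrN; apply: step => //; try by rewrite expn_gt0.
- by rewrite size_polyN.
- by move=> k; case: (IH k).
- by move=> k; rewrite PS_opp ncN; case: (IH k).
- have : nc (RSP C s.+1).[z] ^+ 2 >= 0 by apply: sqr_ge0.
  rewrite /RSP /RSQ RS_S /= mulrN in hN1 *; rewrite e4 in hN1; lra.
Qed.

Lemma final n t : (64 * 2 ^ t.+1 <= n)%N ->
  `|cfun t theta| <= Num.sqrt n%:R /\
  `|sefun n t theta| <= 6 * Num.sqrt n%:R.
Proof.
move=> hnat.
have hn : 64 * (2 ^ t.+1)%:R <= n%:R :> R.
  by rewrite -(natrM R 64) ler_nat.
have hn8 : 128 <= n%:R :> R.
  have : (128 <= n)%N.
    have h2 : (2 <= 2 ^ t.+1)%N by rewrite expnS leq_pmulr // expn_gt0.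
    lia.
  by rewrite -(ler_nat R).
set q := Num.sqrt n%:R.
have q0 : 0 <= q by apply: sqrtr_ge0.
have hq : q ^+ 2 = n%:R by rewrite sqr_sqrtr // ler0n.
have hN := RS_norm t.
set X := nc (RSP C t).[z] in hN *; set Y := nc (RSQ C t).[z] in hN *.
have gX : 0 <= X by apply: nc_ge0.
have gY : 0 <= Y by apply: nc_ge0.
split.
  rewrite /cfun /=.
  set T := (2 ^ (t + 10))%N.
  set w := (z ^+ T * _ + _).
  apply: le_trans (nc_Re w) _.
  have h2 := ncD (z ^+ T * (RSP C t).[z]) (z ^+ (2 * T) * (RSQ C t).[z]).
  rewrite !ncZ -/X -/Y -/w in h2.
  have gw := nc_ge0 w.
  apply: sq_le => //.
  rewrite hq.
  have hsq : 0 <= (X - Y) ^+ 2 by apply: sqr_ge0.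
  nra.
rewrite /sefun /=.
set T := (2 ^ (t + 10))%N.
have -> : (RSPlt C n.+1).[z] = PS (RSP C n.+1) n.+1 by rewrite /RSPlt horner_poly.
set S := PS _ _.
set w := (S - _ - _).
apply: le_trans (nc_Im w) _.
have h1 := ncD (S - z ^+ T * (RSP C t).[z]) (- (z ^+ (2 * T) * (RSP C t).[z])).
have h2 := ncD S (- (z ^+ T * (RSP C t).[z])).
rewrite !ncN !ncZ -/X in h1 h2.
have [hS _] := PS_bound n.+1 n.+1.
rewrite -/S in hS.
have gS := nc_ge0 S.
have gw := nc_ge0 w.
rewrite -/w in h1.
have hA : 2 * nc S <= 9 * q.
  apply: sq_le; [nra | nra |].
  rewrite !exprMn hq.
  have e : (n.+1)%:R = n%:R + 1 :> R by rewrite -natr1.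
  rewrite e in hS.
  nra.
have hB : 8 * X <= q.
  apply: sq_le; [nra | nra |].
  rewrite hq.
  have : 0 <= Y ^+ 2 by apply: sqr_ge0.
  nra.
lra.
Qed.
End Aux.

Theorem lemma3p3 (R : realType) :
  exists N : nat, forall n t : nat, (N <= n)%N -> odd t ->
    let gamma : R := ((2 ^ (t + 11) + 2 ^ t - 1)%N)%:R / n%:R in
    (2%:R ^- 43 < gamma) -> (gamma <= 2%:R ^- 40) ->
    forall theta : R,
      `|cfun t theta| <= Num.sqrt n%:R /\
      `|sefun n t theta| <= 6 * Num.sqrt n%:R.
Proof.
exists 0%N => n t _ _ gamma h1 h2 theta.
apply: final.
rewrite /gamma in h1 h2; clear gamma.
set k := (2 ^ (t + 11) + 2 ^ t - 1)%N in h1 h2.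
have n0 : (0 < n)%N.
  case: n h1 h2 => [|n] // h1 _.
  rewrite invr0 mulr0 in h1.
  have : 0 < (2%:R : R) ^- 43 by rewrite invr_gt0 exprn_gt0.
  by rewrite ltNge (ltW h1).
have n0' : 0 < n%:R :> R by rewrite ltr0n.
rewrite ler_pdivrMr // mulrC ler_pdivlMr ?exprn_gt0 // in h2.
rewrite -natrX -natrM ler_nat in h2.
apply: leq_trans h2.
have hk : (2 ^ (t + 11) <= k)%N.
  rewrite /k; have : (0 < 2 ^ t)%N by rewrite expn_gt0.
  lia.
apply: leq_trans (leq_pmulr _ _) => //.
apply: leq_trans hk.
rewrite (_ : (t + 11) = t.+1 + 10)%N; last by lia.
by rewrite expnD mulnC leq_pmul2l ?expn_gt0.
Qed.
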